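(* Let $n\ge 1$ and $k\ge 0$ be integers, let $G_n$ be the disjoint union of $n$ copies of the one-way infinite ladder, and let $M_n$ be the algebraic cycle matroid of $G_n$. Then $\mathrm{Spec}(M_n[k])=\{k,k+1,\dots,k+n\}$.
   Context: The one-way infinite ladder is the graph with vertices $u_i,w_i$ ($i\ge 1$) and edges $u_iu_{i+1}$, $w_iw_{i+1}$ and $u_iw_i$ for all $i\ge1$. For a graph $G$, an algebraic cycle is a nonempty edge set $A$ such that every vertex has even degree in the subgraph $(V(G),A)$; the algebraic cycle matroid of $G_n$ has ground set $E(G_n)$ and as independent sets the edge sets containing no algebraic cycle (this is a matroid for $G_n$). Matroids are in the sense of: $\emptyset$ independent; subsets of independent sets independent; if $B$ is maximal independent and $A$ is non-maximal independent then $A\cup\{b\}$ is independent for some $b\in B\setminus A$; for independent $A\subseteq X\subseteq E$ there is a maximal independent $S$ with $A\subseteq S\subseteq X$. Bases are maximal independent sets; the rank is the cardinality of a base (all infinite cardinalities identified). For a matroid $M=(E,\mathcal{L})$ of rank at least $k$, $M[k]=(E,\mathcal{L}[k])$ where $\mathcal{L}[k]=\{S\in\mathcal{L}: \exists T\in\mathcal{L},\ T\supseteq S,\ |T\setminus S|=k\}$; this is a matroid. The finitarization $M^{\mathrm{fin}}$ has as independent sets all sets whose finite subsets are all independent in $M$. $\mathrm{Spec}(M)=\{|F\setminus B|: B\subseteq F,\ F\text{ a base of }M^{\mathrm{fin}},\ B\text{ a base of }M\}$, with all infinite cardinalities identified with a single value $\infty$. *)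

(* Defs.v *)
From Stdlib Require Import List.
From mathcomp Require Import all_boot.
Set Implicit Arguments. Unset Strict Implicit. Unset Printing Implicit Defensive.

Definition eset (E : Type) := E -> Prop.
Definition subset {E} (A B : eset E) : Prop := forall x, A x -> B x.
Definition setdiff {E} (A B : eset E) : eset E := fun x => A x /\ ~ B x.

Definition finite_set {E} (A : eset E) : Prop :=
  exists l : list E, forall x, A x -> In x l.

Definition has_card {E} (A : eset E) (j : nat) : Prop :=
  exists l : list E, NoDup l /\ length l = j /\ (forall x, A x <-> In x l).

(* cardinality with all infinite cardinalities identified: None = infinity *)
Definition card_is {E} (A : eset E) (c : option nat) : Prop :=
  match c with
  | Some j => has_card A j
  | None => ~ finite_set A
  end.

(* a matroid is given by its independence predicate *)
Definition is_base {E} (indep : eset E -> Prop) (B : eset E) : Prop :=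
  indep B /\ (forall B', indep B' -> subset B B' -> subset B' B).

(* M[k]: S independent with an independent T ⊇ S, |T \ S| = k *)
Definition truncate {E} (indep : eset E -> Prop) (k : nat) (S : eset E) : Prop :=
  indep S /\ exists T, indep T /\ subset S T /\ has_card (setdiff T S) k.

Definition finitarize {E} (indep : eset E -> Prop) (S : eset E) : Prop :=
  forall F, finite_set F -> subset F S -> indep F.

Definition Spec {E} (indep : eset E -> Prop) (c : option nat) : Prop :=
  exists B F, is_base (finitarize indep) F /\ is_base indep B /\
              subset B F /\ card_is (setdiff F B) c.

Definition even_degree {V E} (inc : E -> V -> Prop) (A : eset E) (v : V) : Prop :=
  exists j, has_card (fun e => A e /\ inc e v) j /\ ~~ odd j.

Definition alg_cycle {V E} (inc : E -> V -> Prop) (A : eset E) : Prop :=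
  (exists e, A e) /\ forall v, even_degree inc A v.

Definition alg_cycle_indep {V E} (inc : E -> V -> Prop) (I : eset E) : Prop :=
  ~ exists A, subset A I /\ alg_cycle inc A.

(* Indices are shifted to start at 0: vertex (c, i, false) is u_{i+1} and
   (c, i, true) is w_{i+1} in copy c. *)
Inductive ekind := Rung | RailU | RailW.
Definition lvertex (n : nat) := ('I_n * nat * bool)%type.
Definition ledge (n : nat) := ('I_n * nat * ekind)%type.

Definition ends (n : nat) (e : ledge n) : lvertex n * lvertex n :=
  match e with
  | (c, i, Rung)  => ((c, i, false), (c, i, true))
  | (c, i, RailU) => ((c, i, false), (c, i.+1, false))
  | (c, i, RailW) => ((c, i, true), (c, i.+1, true))
  end.

Definition ladder_inc (n : nat) (e : ledge n) (v : lvertex n) : Prop :=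
  v = (ends e).1 \/ v = (ends e).2.

Definition Mn (n : nat) : eset (ledge n) -> Prop :=
  alg_cycle_indep (@ladder_inc n).

(* Main.v *)
From HB Require Import structures.
Require Import Defs.
From Stdlib Require Import List.
From mathcomp Require Import all_boot.
From Stdlib Require Import Classical ClassicalEpsilon.
From mathcomp Require Import zify.
Set Implicit Arguments. Unset Strict Implicit. Unset Printing Implicit Defensive.

Definition ekind_eqb (a b : ekind) :=
  match a, b with Rung, Rung | RailU, RailU | RailW, RailW => true | _, _ => false end.
Lemma ekind_eqP : Equality.axiom ekind_eqb.
Proof. by case; case; constructor. Qed.
HB.instance Definition _ := hasDecEq.Build ekind ekind_eqP.
Lemma ekE (a b : ekind) : (a == b) = ekind_eqb a b.
Proof. by []. Qed.

Definition dec (P : Prop) : bool := if excluded_middle_informative P then true else false.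
Lemma decP P : reflect P (dec P).
Proof. rewrite /dec; case: excluded_middle_informative => h; by constructor. Qed.
Lemma decT (P : Prop) : P -> dec P = true.
Proof. by move=> h; apply/decP. Qed.
Lemma decF (P : Prop) : ~ P -> dec P = false.
Proof. by move=> h; apply/decP. Qed.
Lemma dec_iff (P : Prop) (b : bool) : (P <-> b) -> dec P = b.
Proof. move=> h; case: b h => h; [apply: decT; exact/h | apply: decF => /h; done]. Qed.

Lemma InE (T : eqType) (x : T) (l : seq T) : In x l <-> x \in l.
Proof.
elim: l => [|y l IH] //=; rewrite inE; split.
- by case=> [->|/IH ->]; rewrite ?eqxx ?orbT.
- by case/orP=> [/eqP->|/IH]; [left|right].
Qed.
Lemma NoDupE (T : eqType) (l : seq T) : NoDup l <-> uniq l.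
Proof.
elim: l => [|y l IH] /=; first by split => // _; constructor.
split.
- move=> h; inversion h; subst; apply/andP; split; last exact/IH.
  by apply/negP => /InE.
- case/andP => h1 h2; constructor; last exact/IH.
  by move/InE; apply/negP.
Qed.
Lemma lengthE T (l : list T) : length l = size l.
Proof. by elim: l => //= x l ->. Qed.

Lemma has_card_uniq E (A : eset E) j j' : has_card A j -> has_card A j' -> j = j'.
Proof.
move=> [l [h1 [h2 h3]]] [l' [h1' [h2' h3']]]; subst.
apply/eqP; rewrite eqn_leq; apply/andP; split; apply/leP; apply: NoDup_incl_length => //.
- by move=> x /h3 /h3'.
- by move=> x /h3' /h3.
Qed.

Lemma has_card_seq (E : eqType) (A : eset E) (l : seq E) :
  uniq l -> (forall x, A x <-> x \in l) -> has_card A (size l).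
Proof.
move=> u h; exists l; split; first exact/NoDupE.
split; first exact: lengthE.
by move=> x; rewrite h InE.
Qed.

Lemma even_degree_seq V (E : eqType) (inc : E -> V -> Prop) (A : eset E) v (l : seq E) :
  uniq l -> (forall e, A e /\ inc e v <-> e \in l) ->
  (even_degree inc A v <-> ~~ odd (size l)).
Proof.
move=> u h; have hc := has_card_seq u h.
split; first by case=> j [hj hj']; rewrite (has_card_uniq hc hj).
by move=> hl; exists (size l).
Qed.
Section Ladder.
Variable p : nat.
Local Notation n := p.+1.
Local Notation E := (ledge n).

Lemma inc_u (e : E) c i : ladder_inc e (c, i, false) <->
  e = (c, i, Rung) \/ e = (c, i, RailU) \/ (exists i', i = i'.+1 /\ e = (c, i', RailU)).
Proof.
case: e => [[c' j] []]; rewrite /ladder_inc /=; split.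
- by case=> [[-> ->]|[]]; left.
- by case=> [[-> ->]|[|[i' []]]]; [left| |].
- by case=> [[-> ->]|[-> ->]]; [right; left| right; right; exists j].
- by case=> [|[[-> ->]|[i' [-> [-> ->]]]]]; [|left|right].
- by case.
- by case=> [|[|[i' [_ ]]]].
Qed.

Lemma inc_w (e : E) c i : ladder_inc e (c, i, true) <->
  e = (c, i, Rung) \/ e = (c, i, RailW) \/ (exists i', i = i'.+1 /\ e = (c, i', RailW)).
Proof.
case: e => [[c' j] []]; rewrite /ladder_inc /=; split.
- by case=> [[]|[-> ->]] //; left.
- by case=> [[-> ->]|[|[i' []]]]; [right| |].
- by case.
- by case=> [|[|[i' [_ ]]]].
- by case=> [[-> ->]|[-> ->]]; [right; left| right; right; exists j].
- by case=> [|[[-> ->]|[i' [-> [-> ->]]]]]; [|left|right].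
Qed.

Definition prv (A : eset E) c i k : nat :=
  match i with 0 => 0 | i'.+1 => dec (A (c, i', k)) end.

Definition cand c i k : seq E := (c, i, Rung) :: (c, i, k) ::
   (match i with 0 => [::] | i'.+1 => [:: (c, i', k)] end).

Lemma deg_gen (A : eset E) c i (s : bool) (k : ekind) :
  k = (if s then RailW else RailU) ->
  even_degree (@ladder_inc n) A (c, i, s) <->
  ~~ odd (dec (A (c, i, Rung)) + dec (A (c, i, k)) + prv A c i k).
Proof.
move=> hk.
have uc : uniq (cand c i k).
  case: i => [|i]; subst k; case: s;
    by rewrite /cand /= !inE !xpair_eqE !ekE /= ?eqxx ?(gtn_eqF (ltnSn _)) ?andbF ?andbT.
have hinc : forall e, ladder_inc e (c, i, s) <-> e \in cand c i k.
  move=> e; rewrite /cand; subst k; clear uc; case: s.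
  - rewrite inc_w; case: i => [|i] /=; rewrite !inE; split.
    + by case=> [->|[->|[i' []]]]; rewrite ?eqxx ?orbT.
    + by case/orP=> [/eqP->|/eqP->]; [left|right;left].
    + by case=> [->|[->|[i' [[<-] ->]]]]; rewrite ?eqxx ?orbT.
    + by case/orP=> [/eqP->|/orP[/eqP->|/eqP->]]; [left|right;left|right;right;exists i].
  - rewrite inc_u; case: i => [|i] /=; rewrite !inE; split.
    + by case=> [->|[->|[i' []]]]; rewrite ?eqxx ?orbT.
    + by case/orP=> [/eqP->|/eqP->]; [left|right;left].
    + by case=> [->|[->|[i' [[<-] ->]]]]; rewrite ?eqxx ?orbT.
    + by case/orP=> [/eqP->|/orP[/eqP->|/eqP->]]; [left|right;left|right;right;exists i].
rewrite (@even_degree_seq _ _ _ A _ (filter (fun e => dec (A e)) (cand c i k))).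
- rewrite size_filter /cand; case: i {uc hinc} => [|i] /=; by rewrite !addnA ?addn0.
- exact: filter_uniq.
- move=> e; rewrite mem_filter hinc; split; first by case=> h1 ->; rewrite (decT h1).
  by case/andP => /decP.
Qed.

Lemma deg_u (A : eset E) c i : even_degree (@ladder_inc n) A (c, i, false) <->
  ~~ odd (dec (A (c, i, Rung)) + dec (A (c, i, RailU)) + prv A c i RailU).
Proof. exact: deg_gen. Qed.
Lemma deg_w (A : eset E) c i : even_degree (@ladder_inc n) A (c, i, true) <->
  ~~ odd (dec (A (c, i, Rung)) + dec (A (c, i, RailW)) + prv A c i RailW).
Proof. exact: deg_gen. Qed.

End Ladder.
Section Ladder2.
Variable p : nat.
Local Notation n := p.+1.
Local Notation E := (ledge n).

Definition evenA (A : eset E) := forall v, even_degree (@ladder_inc n) A v.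
Definition conn (X : eset E) c N := exists a, a <= N /\ X (c, a, Rung) /\
  forall i, a <= i -> i < N -> X (c, i, RailU) /\ X (c, i, RailW).

Lemma alg_even (A : eset E) : alg_cycle (@ladder_inc n) A -> evenA A.
Proof. by case. Qed.

Lemma pu (A : eset E) c i : evenA A ->
  ~~ odd (dec (A (c, i, Rung)) + dec (A (c, i, RailU)) + prv A c i RailU).
Proof. by move=> h; apply/deg_u/h. Qed.
Lemma pw (A : eset E) c i : evenA A ->
  ~~ odd (dec (A (c, i, Rung)) + dec (A (c, i, RailW)) + prv A c i RailW).
Proof. by move=> h; apply/deg_w/h. Qed.

Lemma rail_eqb (A : eset E) c i : evenA A ->
  dec (A (c, i, RailU)) = dec (A (c, i, RailW)).
Proof.
move=> hA; elim: i => [|i IH].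
  move: (pu c 0 hA) (pw c 0 hA); rewrite /prv !addn0.
  by case: (dec (A (c, 0, Rung))); case: (dec (A (c, 0, RailU))); case: (dec (A (c, 0, RailW))).
move: (pu c i.+1 hA) (pw c i.+1 hA); rewrite /prv IH.
by case: (dec (A (c, i.+1, Rung))); case: (dec (A (c, i.+1, RailU)));
  case: (dec (A (c, i.+1, RailW))); case: (dec (A (c, i, RailW))).
Qed.

Lemma rail_eq (A : eset E) c i : evenA A -> A (c, i, RailU) <-> A (c, i, RailW).
Proof. move=> hA; have := rail_eqb c i hA; by split => [/decP|/decP]; rewrite ?H => h; apply/decP; rewrite ?H // -?H. Qed.

Lemma conn_left (A : eset E) c N : evenA A -> A (c, N, RailU) ->
  exists a, a <= N /\ A (c, a, Rung) /\
  forall i, a <= i -> i <= N -> A (c, i, RailU) /\ A (c, i, RailW).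
Proof.
move=> hA; elim: N => [|N IH] hU.
  have := pu c 0 hA; rewrite /prv addn0 (decT hU).
  case: (decP (A (c, 0, Rung))) => // hR _.
  exists 0; split => //; split => // i _; rewrite leqn0 => /eqP ->.
  by split => //; apply/rail_eq.
have := pu c N.+1 hA; rewrite /prv (decT hU).
case: (decP (A (c, N.+1, Rung))) => hR.
  move=> _; exists N.+1; split => //; split => // i h1 h2.
  have -> : i = N.+1 by lia.
  by split => //; apply/rail_eq.
case: (decP (A (c, N, RailU))) => // hU' _.
case: (IH hU') => a [ha [hRa hi]]; exists a; split; first lia.
split => // i h1 h2; case: (ltnP i N.+1) => h3; first exact: hi.
have -> : i = N.+1 by lia.
by split => //; apply/rail_eq.
Qed.

Lemma rung_rail (A : eset E) c a : evenA A -> A (c, a, Rung) ->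
  A (c, a, RailU) \/ exists a', a = a'.+1 /\ A (c, a', RailU).
Proof.
move=> hA hR; have := pu c a hA; rewrite (decT hR) /prv.
case: (decP (A (c, a, RailU))) => hU; first by left.
case: a hR hU => [|a] hR hU //=.
case: (decP (A (c, a, RailU))) => // hU' _; right; by exists a.
Qed.

Lemma addU_core (A X : eset E) c N : evenA A ->
  (forall e, A e -> X e \/ e = (c, N, RailU)) -> A (c, N, RailU) ->
  X (c, N, RailW) /\ conn X c N.
Proof.
move=> hA hs hU; case: (conn_left hA hU) => a [ha [hRa hi]].
have hW : A (c, N, RailW) by apply/rail_eq.
split; first by case: (hs _ hW).
exists a; split => //; split; first by case: (hs _ hRa).
move=> i h1 h2; case: (hi i h1 (ltnW h2)) => hu hw; split.
- case: (hs _ hu) => // [[]] e; lia.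
- by case: (hs _ hw).
Qed.

Lemma addW_core (A X : eset E) c N : evenA A ->
  (forall e, A e -> X e \/ e = (c, N, RailW)) -> A (c, N, RailW) ->
  X (c, N, RailU) /\ conn X c N.
Proof.
move=> hA hs hW; have hU : A (c, N, RailU) by apply/rail_eq.
case: (conn_left hA hU) => a [ha [hRa hi]].
split; first by case: (hs _ hU).
exists a; split => //; split; first by case: (hs _ hRa).
move=> i h1 h2; case: (hi i h1 (ltnW h2)) => hu hw; split.
- by case: (hs _ hu).
- case: (hs _ hw) => // [[]] e; lia.
Qed.

End Ladder2.
Section Ladder3.
Variable p : nat.
Local Notation n := p.+1.
Local Notation E := (ledge n).

Definition Cyc (c : 'I_n) (P : nat -> bool) : eset E := fun e =>
  let: (c', i, k) := e in c' = c /\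
  match k with
  | Rung => (P i (+) (if i is i'.+1 then P i' else false)) = true
  | _ => P i = true
  end.

Lemma dec_eq (P Q : Prop) : (P <-> Q) -> dec P = dec Q.
Proof. move=> h; apply: dec_iff; split => [/h /decP -> //|/decP /h //]. Qed.

Lemma decCycR c P c' i : dec (Cyc c P (c', i, Rung)) =
  (c' == c) && (P i (+) (if i is i'.+1 then P i' else false)).
Proof.
apply: dec_iff; split => [[-> h]|/andP [/eqP -> h]] //; by rewrite eqxx h.
Qed.
Lemma decCycK c P c' i k : k != Rung -> dec (Cyc c P (c', i, k)) = (c' == c) && P i.
Proof.
move=> hk; apply: dec_iff; case: k hk => // _; split => [[-> h]|/andP [/eqP -> h]] //; by rewrite eqxx h.
Qed.

Lemma Cyc_even c P : evenA (Cyc c P).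
Proof.
case=> [[c' i] s]; apply/(@deg_gen _ _ _ _ _ (if s then RailW else RailU)) => //.
rewrite decCycR decCycK; last by case: s.
rewrite /prv; case: i => [|i]; first by case: (c' == c); case: (P 0).
rewrite decCycK; last by case: s.
by case: (c' == c); case: (P i.+1); case: (P i).
Qed.

Lemma Cyc_alg c (P : nat -> bool) i : P i -> alg_cycle (@ladder_inc n) (Cyc c P).
Proof. move=> h; split; last exact: Cyc_even. by exists (c, i, RailU). Qed.

Fixpoint wl (c : 'I_n) N : seq E := match N with
  | 0 => [:: (c, 0, Rung)]
  | N'.+1 => (c, N'.+1, Rung) :: (c, N', RailU) :: (c, N', RailW) :: wl c N'
  end.
Definition inw (c : 'I_n) N (e : E) : bool :=
  (e.1.1 == c) && (if e.2 == Rung then e.1.2 <= N else e.1.2 < N).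

Lemma mem_wl c N e : (e \in wl c N) = inw c N e.
Proof.
case: e => [[c' i] k]; rewrite /inw /=; elim: N => [|N IH].
  by rewrite /= inE !xpair_eqE; case: k; rewrite ekE /= ?andbT ?andbF // leqn0.
rewrite /= !inE IH !xpair_eqE; clear IH; case: k; rewrite !ekE /= ?andbT ?andbF ?orbF /=;
  case: (c' == c) => //=; by rewrite [in RHS]leq_eqVlt ?ltnS.
Qed.

Lemma uniq_wl c N : uniq (wl c N).
Proof.
elim: N => [|N IH] //=; rewrite IH !inE !mem_wl /inw /= !xpair_eqE !ekE /= !eqxx /=.
by rewrite ltnn !andbF.
Qed.

Definition cnt (X : eset E) (s : seq E) := count (fun e => dec (X e)) s.

Lemma conn0 (X : eset E) (c : 'I_n) : conn X c 0 <-> X (c, 0, Rung).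
Proof.
split; first by case=> a [ha [h _]]; move: ha h; rewrite leqn0 => /eqP ->.
move=> h; exists 0; split => //; split => // i _ h'; lia.
Qed.

Lemma connS (X : eset E) (c : 'I_n) N : conn X c N.+1 <->
  X (c, N.+1, Rung) \/ (conn X c N /\ X (c, N, RailU) /\ X (c, N, RailW)).
Proof.
split.
  case=> a [ha [hR hi]]; case: (ltnP a N.+1) => h.
    right; split; last exact: hi.
    exists a; split; first lia; split => // i h1 h2; apply: hi; lia.
  by left; have <- : a = N.+1 by lia.
case=> [h|[[a [ha [hR hi]]] [hU hW]]].
  exists N.+1; split => //; split => // i h1 h2; lia.
exists a; split; first lia; split => // i h1 h2.
case: (ltnP i N) => h3; first exact: hi.
by have -> : i = N by lia.
Qed.

Lemma dec_connS (X : eset E) (c : 'I_n) N : dec (conn X c N.+1) =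
  dec (X (c, N.+1, Rung)) || (dec (conn X c N) && dec (X (c, N, RailU)) && dec (X (c, N, RailW))).
Proof.
apply: dec_iff; rewrite connS.
case: (decP (X (c, N.+1, Rung))); case: (decP (conn X c N));
  case: (decP (X (c, N, RailU))); case: (decP (X (c, N, RailW))) => h1 h2 h3 h4 /=;
  split => //; intuition.
Qed.

Lemma upper (X : eset E) (c : 'I_n) : (forall N, conn X c N -> X (c, N, RailU) -> X (c, N, RailW) ->
   X (c, N.+1, Rung) -> False) ->
  forall N, cnt X (wl c N) <= N.*2 + dec (conn X c N).
Proof.
move=> H; elim=> [|N IH].
  by rewrite /cnt /= (dec_eq (conn0 X c)) addn0.
rewrite /cnt /= -/(cnt X (wl c N)) dec_connS.
move: IH (H N).
case: (decP (X (c, N.+1, Rung))); case: (decP (conn X c N));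
  case: (decP (X (c, N, RailU))); case: (decP (X (c, N, RailW))) => /= h1 h2 h3 h4 IH H';
  try (exfalso; by apply: H'); lia.
Qed.

Lemma tight (X : eset E) (c : 'I_n) :
  (forall N, ~ X (c, N, RailU) -> X (c, N, RailW) /\ conn X c N) ->
  (forall N, ~ X (c, N, RailW) -> X (c, N, RailU) /\ conn X c N) ->
  forall N, N.*2 + dec (conn X c N) <= cnt X (wl c N).
Proof.
move=> H1 H2; elim=> [|N IH].
  by rewrite /cnt /= (dec_eq (conn0 X c)) addn0.
rewrite /cnt /= -/(cnt X (wl c N)) dec_connS.
move: IH (H1 N) (H2 N).
case: (decP (X (c, N.+1, Rung))); case: (decP (conn X c N));
  case: (decP (X (c, N, RailU))); case: (decP (X (c, N, RailW))) => /= h1 h2 h3 h4 IH H1' H2';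
  try lia; try (case: (H1' h2) => //); try (case: (H2' h1) => //).
Qed.

End Ladder3.
Section Ladder4.
Variable p : nat.
Local Notation n := p.+1.
Local Notation E := (ledge n).
Local Notation Mn := (@Mn n).

Definition Rect (c : 'I_n) a b : eset E := Cyc c (fun i => (a <= i) && (i < b)).
Definition Dr (c : 'I_n) a : eset E := Cyc c (fun i => a <= i).

Lemma rect_rung a b i : a < b ->
  ((a <= i) && (i < b)) (+) (if i is i'.+1 then (a <= i') && (i' < b) else false) ->
  i = a \/ i = b.
Proof.
move=> hab; case: i => [|i] /=.
  case E1: (a <= 0); case E2: (0 < b) => //= _; lia.
case E1: (a <= i.+1); case E2: (i.+1 < b); case E3: (a <= i); case E4 : (i < b) => //= _; lia.
Qed.

Lemma Rect_alg c a b : a < b -> alg_cycle (@ladder_inc n) (Rect c a b).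
Proof. move=> h; apply: (@Cyc_alg _ _ _ a); by rewrite leqnn h. Qed.
Lemma Dr_alg c a : alg_cycle (@ladder_inc n) (Dr c a).
Proof. apply: (@Cyc_alg _ _ _ a); by rewrite leqnn. Qed.

Lemma Rect_fin c a b : finite_set (Rect c a b).
Proof.
exists (wl c b) => -[[c' i] k] [-> h]; apply/InE; rewrite mem_wl /inw /= eqxx /=.
case: k h => /= h.
- move: h; case: i => [|i] /=; first by [].
  case E1: (a <= i.+1); case E2: (i.+1 < b); case E3: (a <= i); case E4 : (i < b) => //= _; lia.
- by case/andP: h.
- by case/andP: h.
Qed.

Lemma conn_rect (X : eset E) c N : conn X c N -> X (c, N, RailU) -> X (c, N, RailW) ->
  X (c, N.+1, Rung) -> exists a, a < N.+1 /\ Defs.subset (Rect c a N.+1) X.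
Proof.
case=> a [ha [hR hi]] hU hW hR'; exists a; split; first lia.
move=> [[c' i] k] [-> h]; case: k h => /= h.
- have ha' : a < N.+1 by lia.
  by case: (rect_rung ha' h) => ->.
- case/andP: h => h1 h2; case: (ltnP i N) => h3; first by case: (hi i h1 h3).
  by have -> : i = N by lia.
- case/andP: h => h1 h2; case: (ltnP i N) => h3; first by case: (hi i h1 h3).
  by have -> : i = N by lia.
Qed.

Lemma conn_D (X : eset E) c N : conn X c N ->
  (forall i, N <= i -> X (c, i, RailU) /\ X (c, i, RailW)) -> exists a, Defs.subset (Dr c a) X.
Proof.
case=> a [ha [hR hi]] hj; exists a.
move=> [[c' i] k] [-> h]; case: k h => /= h.
- have -> : i = a; last by [].
  move: h; case: i => [|i] /=; first by case E0: (a <= 0) => //= _; lia.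
  case E1: (a <= i.+1); case E3: (a <= i) => //= _; lia.
- case: (ltnP i N) => h3; first by case: (hi i h h3).
  by case: (hj i h3).
- case: (ltnP i N) => h3; first by case: (hi i h h3).
  by case: (hj i h3).
Qed.

Lemma Mn_noalg (X A : eset E) : Mn X -> Defs.subset A X -> alg_cycle (@ladder_inc n) A -> False.
Proof. by move=> h hs ha; apply: h; exists A. Qed.
Lemma trunc_Mn k (X : eset E) : truncate Mn k X -> Mn X.
Proof. by case. Qed.
Lemma Mn_sub (X Y : eset E) : Mn X -> Defs.subset Y X -> Mn Y.
Proof. move=> h hs [A [hA ha]]; apply: h; exists A; split => // x /hA /hs //. Qed.
Lemma fin_noalg k (X A : eset E) : finitarize (truncate Mn k) X -> Defs.subset A X ->
  finite_set A -> alg_cycle (@ladder_inc n) A -> False.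
Proof.
move=> h hs hf ha; have := trunc_Mn (h A hf hs) => hM.
by apply: (Mn_noalg hM _ ha).
Qed.

Lemma upper_Mn (X : eset E) c : Mn X -> forall N, cnt X (wl c N) <= N.*2 + dec (conn X c N).
Proof.
move=> h; apply: upper => N hc hU hW hR.
case: (conn_rect hc hU hW hR) => a [ha hs].
exact: (Mn_noalg h hs (Rect_alg c ha)).
Qed.
Lemma upper_fin k (X : eset E) c : finitarize (truncate Mn k) X ->
  forall N, cnt X (wl c N) <= N.*2 + dec (conn X c N).
Proof.
move=> h; apply: upper => N hc hU hW hR.
case: (conn_rect hc hU hW hR) => a [ha hs].
exact: (fin_noalg h hs (Rect_fin c a N.+1) (Rect_alg c ha)).
Qed.

Definition mx (l : seq E) := foldr (fun e m => maxn e.1.2 m) 0 l.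
Lemma mxP (l : seq E) x : x \in l -> x.1.2 <= mx l.
Proof.
elim: l => //= y l IH; rewrite inE => /orP [/eqP ->|/IH h]; first exact: leq_maxl.
exact: (leq_trans h (leq_maxr _ _)).
Qed.

Lemma extend k (F0 : eset E) : Mn F0 -> finite_set F0 -> truncate Mn k F0.
Proof.
move=> hM [l hl]; set M := mx l.
pose K := fun e : E => e.1.1 = ord0 /\ e.2 = Rung /\ M.+2 <= e.1.2 < M.+2 + k.
have hFM : forall e, F0 e -> e.1.2 <= M by move=> e /hl /InE /mxP.
split => //; exists (fun e => F0 e \/ K e); split; last split.
- move=> [A [hA halg]]; apply: hM; exists A; split => //.
  move=> e he; case: (hA e he) => // -[]; case: e he => [[c q] kd] he /= [-> [hk hq]].
  subst kd; case: (rung_rail (alg_even halg) he) => [hu|[q' [hq' hu]]].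
  + case: (hA _ hu) => [/hFM /= h|[_ []]] //; lia.
  + case: (hA _ hu) => [/hFM /= h|[_ []]] //; lia.
- by move=> x h; left.
- exists [seq (ord0, M.+2 + t, Rung) | t <- iota 0 k]; split; last split.
  + apply/NoDupE; rewrite map_inj_uniq ?iota_uniq //; move=> t1 t2 [] /eqP; lia.
  + by rewrite lengthE size_map size_iota.
  + move=> x; rewrite InE; split.
    * case=> [[//|[hc [hk hq]]] hn]; apply/mapP; exists (x.1.2 - M.+2).
        rewrite mem_iota; lia.
      case: x hc hk hq {hn} => [[c q] kd] /= -> -> hq; congr (_, _, _); lia.
    * case/mapP => t; rewrite mem_iota => ht ->; split; first (right; rewrite /K /=; do 2 (split => //); lia).
      by move/hFM => /=; lia.
Qed.

Lemma fin_of k (X : eset E) :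
  (forall A, alg_cycle (@ladder_inc n) A -> Defs.subset A X -> finite_set A -> False) ->
  finitarize (truncate Mn k) X.
Proof.
move=> H F0 hf hs; apply: extend => //.
move=> [A [hA halg]]; apply: (H A halg); first by move=> x /hA /hs.
by case: hf => l hl; exists l => x /hA /hl.
Qed.

End Ladder4.
Section Count.
Variable p : nat.
Local Notation n := p.+1.
Local Notation E := (ledge n).

Lemma cnt_split (X Y : eset E) s : (forall e, Y e -> X e) ->
  cnt X s = cnt Y s + cnt (setdiff X Y) s.
Proof.
move=> h; elim: s => //= e s IH; rewrite /cnt /= -!/(cnt _ s) IH /setdiff.
case: (decP (Y e)) => hy.
  rewrite (decT (h _ hy)) (decF (P := X e /\ ~ Y e)); last by case.
  rewrite /=; lia.
case: (decP (X e)) => hx.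
  by rewrite (decT (P := X e /\ ~ Y e)) //=; lia.
by rewrite (decF (P := X e /\ ~ Y e)) //=; case.
Qed.

Lemma cnt_flatten (X : eset E) (g : 'I_n -> seq E) cs :
  cnt X (flatten (map g cs)) = sumn [seq cnt X (g c) | c <- cs].
Proof. by elim: cs => //= c cs IH; rewrite /cnt count_cat -IH. Qed.

Lemma cnt_mono (X Y : eset E) (g : 'I_n -> seq E) cs :
  (forall c, cnt X (g c) <= cnt Y (g c)) ->
  cnt X (flatten (map g cs)) <= cnt Y (flatten (map g cs)).
Proof.
move=> h; rewrite !cnt_flatten; elim: cs => //= c cs IH.
exact: leq_add.
Qed.

Lemma cnt_le_const (X : eset E) (g : 'I_n -> seq E) cs K :
  (forall c, cnt X (g c) <= K) -> cnt X (flatten (map g cs)) <= size cs * K.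
Proof.
move=> h; rewrite !cnt_flatten; elim: cs => //= c cs IH.
rewrite mulSn; exact: leq_add.
Qed.

Lemma cnt_ge_const (X : eset E) (g : 'I_n -> seq E) cs K :
  (forall c, K <= cnt X (g c)) -> size cs * K <= cnt X (flatten (map g cs)).
Proof.
move=> h; rewrite !cnt_flatten; elim: cs => //= c cs IH.
rewrite mulSn; exact: leq_add.
Qed.

Definition Wn (Nf : 'I_n -> nat) : seq E := flatten [seq wl c (Nf c) | c <- enum 'I_n].

Lemma mem_W Nf e : (e \in Wn Nf) = inw e.1.1 (Nf e.1.1) e.
Proof.
apply/flatten_mapP/idP.
  by case=> c _; rewrite mem_wl /inw => /andP [/eqP ->]; rewrite eqxx.
move=> h; exists e.1.1; first by rewrite mem_enum.
by rewrite mem_wl.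
Qed.

Lemma uniq_W Nf : uniq (Wn Nf).
Proof.
rewrite /Wn; have : uniq (enum 'I_n) by apply: enum_uniq.
elim: (enum 'I_n) => //= c cs IH /andP [hc hu].
rewrite cat_uniq uniq_wl IH // andbT /=.
apply/hasP => -[e /flatten_mapP [c' hc' he'] he].
move: he he'; rewrite !mem_wl /inw => /andP [/eqP h1 _] /andP [/eqP h2 _].
by move: hc'; rewrite -h2 h1 => hc'; rewrite hc' in hc.
Qed.

Lemma cnt_ge_list (X : eset E) s (l : seq E) : uniq l ->
  (forall x, x \in l -> X x /\ x \in s) -> size l <= cnt X s.
Proof.
move=> u h; rewrite /cnt -size_filter; apply: uniq_leq_size => // x /h [hx hs].
by rewrite mem_filter hs (decT hx).
Qed.

Lemma cnt_le_card (X : eset E) s j : uniq s -> has_card X j -> cnt X s <= j.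
Proof.
move=> u [l [hl [hlen hx]]]; rewrite -hlen lengthE /cnt -size_filter.
apply: uniq_leq_size; first exact: filter_uniq.
by move=> x; rewrite mem_filter => /andP [/decP /hx /InE].
Qed.

Lemma cnt_list (X : eset E) s : uniq s ->
  exists l : seq E, NoDup l /\ length l = cnt X s /\ forall x, In x l -> X x.
Proof.
move=> u; exists (filter (fun e => dec (X e)) s); split; first by apply/NoDupE/filter_uniq.
split; first by rewrite lengthE size_filter.
by move=> x /InE; rewrite mem_filter => /andP [/decP].
Qed.

End Count.
Lemma has_card_ext E (A A' : eset E) j : (forall x, A x <-> A' x) -> has_card A j -> has_card A' j.
Proof. move=> h [l [h1 [h2 h3]]]; exists l; split => //; split => // x; split => [/h /h3 //|/h3 /h //]. Qed.

Lemma finite_of_bound E (S : eset E) m :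
  (forall l, NoDup l -> (forall x, In x l -> S x) -> length l <= m) -> finite_set S.
Proof.
move=> H; apply: NNPP => hnf.
have : forall j, exists l, NoDup l /\ length l = j /\ forall x, In x l -> S x.
  elim=> [|j [l [h1 [h2 h3]]]]; first by exists nil; split => //; constructor.
  have : ~ (forall x, S x -> In x l) by move=> h; apply: hnf; exists l.
  move/not_all_ex_not => [x hx].
  have [hSx hnx] : S x /\ ~ In x l by split; [apply: NNPP => h; apply: hx => /h | move=> h; apply: hx].
  exists (x :: l); split; first by constructor.
  by split; [rewrite /= h2 | move=> y [<-|/h3]].
case/(_ m.+1) => l [h1 [h2 h3]]; have := H l h1 h3; rewrite h2; lia.
Qed.

Section PartA.
Variable p : nat.
Local Notation n := p.+1.
Local Notation E := (ledge n).
Local Notation Mn := (@Mn n).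

Definition addE (X : eset E) (e : E) : eset E := fun x => X x \/ x = e.

Lemma add_Mn (X : eset E) e : Mn X ->
  (forall A, alg_cycle (@ladder_inc n) A -> Defs.subset A (addE X e) -> A e -> False) ->
  Mn (addE X e).
Proof.
move=> hM H [A [hA halg]]; case: (classic (A e)) => hae; first exact: (H A).
apply: (Mn_noalg hM _ halg) => x hx; case: (hA x hx) => // hxe; by subst.
Qed.

Lemma add_fin k (X : eset E) e : finitarize (truncate Mn k) X ->
  (forall A, alg_cycle (@ladder_inc n) A -> Defs.subset A (addE X e) -> finite_set A -> A e -> False) ->
  finitarize (truncate Mn k) (addE X e).
Proof.
move=> hF H; apply: fin_of => A halg hA hf; case: (classic (A e)) => hae; first exact: (H A).
apply: (fin_noalg hF _ hf halg) => x hx; case: (hA x hx) => // hxe; by subst.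
Qed.

Lemma Mn_addU (X : eset E) c N : Mn X -> ~ X (c, N, RailU) ->
  ~ (X (c, N, RailW) /\ conn X c N) -> Mn (addE X (c, N, RailU)).
Proof. move=> hM hU hn; apply: add_Mn => // A halg hA hae; apply: hn; exact: (addU_core (alg_even halg) hA hae). Qed.
Lemma Mn_addW (X : eset E) c N : Mn X -> ~ X (c, N, RailW) ->
  ~ (X (c, N, RailU) /\ conn X c N) -> Mn (addE X (c, N, RailW)).
Proof. move=> hM hU hn; apply: add_Mn => // A halg hA hae; apply: hn; exact: (addW_core (alg_even halg) hA hae). Qed.
Lemma fin_addU k (X : eset E) c N : finitarize (truncate Mn k) X -> ~ X (c, N, RailU) ->
  ~ (X (c, N, RailW) /\ conn X c N) -> finitarize (truncate Mn k) (addE X (c, N, RailU)).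
Proof. move=> hM hU hn; apply: add_fin => // A halg hA _ hae; apply: hn; exact: (addU_core (alg_even halg) hA hae). Qed.
Lemma fin_addW k (X : eset E) c N : finitarize (truncate Mn k) X -> ~ X (c, N, RailW) ->
  ~ (X (c, N, RailU) /\ conn X c N) -> finitarize (truncate Mn k) (addE X (c, N, RailW)).
Proof. move=> hM hU hn; apply: add_fin => // A halg hA _ hae; apply: hn; exact: (addW_core (alg_even halg) hA hae). Qed.

Lemma Bmax_contra k (B T : eset E) e : is_base (truncate Mn k) B -> Defs.subset B T -> Mn T ->
  has_card (setdiff T B) k -> ~ T e -> Mn (addE T e) -> False.
Proof.
move=> [hB hmax] hBT hT hc hTe hTe'.
have htr : truncate Mn k (addE B e).
  split; first by apply: (Mn_sub hTe') => x [/hBT h|->]; [left|right].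
  exists (addE T e); split => //; split; first by move=> x [/hBT h|->]; [left|right].
  apply: has_card_ext hc => x; rewrite /setdiff /addE; split.
  - by case=> h1 h2; split; [left|case; [|move=> hx; apply: hTe; rewrite -hx]].
  - case=> [[h1|->] h2]; last by exfalso; apply: h2; right.
    by split => // h; apply: h2; left.
have := hmax _ htr (fun x h => or_introl h) e (or_intror erefl).
by move/hBT.
Qed.

Lemma Bmax_tightU k (B T : eset E) c N : is_base (truncate Mn k) B -> Defs.subset B T -> Mn T ->
  has_card (setdiff T B) k -> ~ T (c, N, RailU) -> T (c, N, RailW) /\ conn T c N.
Proof.
move=> hB hBT hT hc hU; apply: NNPP => hn.
exact: (Bmax_contra hB hBT hT hc hU (Mn_addU hT hU hn)).
Qed.
Lemma Bmax_tightW k (B T : eset E) c N : is_base (truncate Mn k) B -> Defs.subset B T -> Mn T ->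
  has_card (setdiff T B) k -> ~ T (c, N, RailW) -> T (c, N, RailU) /\ conn T c N.
Proof.
move=> hB hBT hT hc hU; apply: NNPP => hn.
exact: (Bmax_contra hB hBT hT hc hU (Mn_addW hT hU hn)).
Qed.

Lemma Fmax_tightU k (F : eset E) c N : is_base (finitarize (truncate Mn k)) F ->
  ~ F (c, N, RailU) -> F (c, N, RailW) /\ conn F c N.
Proof.
move=> [hF hmax] hU; apply: NNPP => hn.
apply: (hU); apply: (hmax _ (fin_addU hF hU hn)); last by right.
by move=> x h; left.
Qed.
Lemma Fmax_tightW k (F : eset E) c N : is_base (finitarize (truncate Mn k)) F ->
  ~ F (c, N, RailW) -> F (c, N, RailU) /\ conn F c N.
Proof.
move=> [hF hmax] hU; apply: NNPP => hn.
apply: (hU); apply: (hmax _ (fin_addW hF hU hn)); last by right.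
by move=> x h; left.
Qed.

Lemma conn_F_large k (F : eset E) c M0 : is_base (finitarize (truncate Mn k)) F ->
  exists N, M0 <= N /\ conn F c N.
Proof.
move=> hFb; apply: NNPP => hno.
have hnc : forall N, M0 <= N -> ~ conn F c N by move=> N h1 h2; apply: hno; exists N.
have hrail : forall N, M0 <= N -> F (c, N, RailU).
  move=> N hN; apply: NNPP => hU; case: (Fmax_tightU hFb hU) => _ /(hnc _ hN).
  done.
have hrung : forall N, M0 <= N -> ~ F (c, N, Rung).
  move=> N hN hR; apply: (hnc _ hN); exists N; split => //; split => // i h1 h2; lia.
have hR : ~ F (c, M0.+1, Rung) by apply: hrung; lia.
case: hFb => [hF hmax]; apply: hR.
apply: (hmax (addE F (c, M0.+1, Rung))); [|by move=> x h; left|by right].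
apply: add_fin => // A halg hA hfA hAR.
have hev := alg_even halg.
have hnU : ~ A (c, M0, RailU).
  move=> hU; case: (conn_left hev hU) => a [ha [hRa hi]]; apply: (hnc M0) => //.
  exists a; split => //; split; first by case: (hA _ hRa) => // -[] e; lia.
  move=> i h1 h2; case: (hi i h1 (ltnW h2)) => hu hw.
  by split; [case: (hA _ hu) | case: (hA _ hw)].
have h0 : A (c, M0.+1, RailU).
  have := pu c M0.+1 hev; rewrite /prv (decT hAR) (decF hnU).
  by case: (decP (A (c, M0.+1, RailU))).
have hall : forall d, A (c, M0.+1 + d, RailU).
  elim=> [|d IH]; first by rewrite addn0.
  have := pu c (M0.+1 + d).+1 hev; rewrite /prv (decT IH).
  case: (decP (A (c, (M0.+1 + d).+1, Rung))) => hr.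
    case: (hA _ hr) => [hF'|[]]; last lia.
    by exfalso; apply: (hrung _ _ hF'); lia.
  by rewrite addnS; case: (decP (A (c, (M0.+1 + d).+1, RailU))).
case: hfA => l hl; have := hall (mx l); move/hl/InE/mxP => /=; lia.
Qed.

End PartA.
Section PartA2.
Variable p : nat.
Local Notation n := p.+1.
Local Notation E := (ledge n).
Local Notation Mn := (@Mn n).

Lemma upper_spec k (F B T : eset E) :
  is_base (finitarize (truncate Mn k)) F -> is_base (truncate Mn k) B ->
  Defs.subset B F -> Defs.subset B T -> Mn T -> has_card (setdiff T B) k ->
  forall l : seq E, NoDup l -> (forall x, In x l -> setdiff F B x) -> length l <= k + n.
Proof.
move=> hFb hBb hBF hBT hT hc l hl hin.
pose N := (mx l).+1; pose W := Wn (p := p) (fun _ => N).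
have h1 : size l <= cnt (setdiff F B) W.
  apply: cnt_ge_list; first exact/NoDupE.
  move=> x hx; split; first exact/hin/InE.
  rewrite mem_W /inw eqxx /=; have := mxP hx; case: (x.2 == Rung) => /=; rewrite /N; lia.
have h2 : cnt F W <= size (enum 'I_n) * (N.*2 + 1).
  apply: cnt_le_const => c; have := upper_fin c hFb.1 N; case: (dec _) => /=; lia.
have h3 : size (enum 'I_n) * N.*2 <= cnt T W.
  apply: cnt_ge_const => c.
  have := tight (fun N' => Bmax_tightU (c := c) (N := N') hBb hBT hT hc)
                (fun N' => Bmax_tightW (c := c) (N := N') hBb hBT hT hc) N.
  lia.
have h4 := cnt_split W hBT.
have h5 : cnt (setdiff T B) W <= k := cnt_le_card (uniq_W _) hc.
have h6 := cnt_split W hBF.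
rewrite size_enum_ord in h2 h3; rewrite lengthE.
rewrite mulnDr muln1 in h2; lia.
Qed.

Lemma lower_spec k (F B T : eset E) :
  is_base (finitarize (truncate Mn k)) F -> is_base (truncate Mn k) B ->
  Defs.subset B F -> Defs.subset B T -> Mn T -> has_card (setdiff T B) k ->
  exists l : seq E, NoDup l /\ k <= length l /\ forall x, In x l -> setdiff F B x.
Proof.
move=> hFb hBb hBF hBT hT hc.
have [LT [hLT1 [hLT2 hLT3]]] := hc.
pose M0 := (mx LT).+1.
have hex : forall c : 'I_n, exists N, M0 <= N /\ conn F c N := fun c => conn_F_large c M0 hFb.
pose Nf c := proj1_sig (constructive_indefinite_description _ (hex c)).
have hNf : forall c, M0 <= Nf c /\ conn F c (Nf c) :=
  fun c => proj2_sig (constructive_indefinite_description _ (hex c)).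
pose W := Wn Nf.
have hmono : cnt T W <= cnt F W.
  apply: cnt_mono => c; have [_ hcF] := hNf c.
  have := upper_Mn c hT (Nf c).
  have := tight (fun N' => Fmax_tightU (c := c) (N := N') hFb)
                (fun N' => Fmax_tightW (c := c) (N := N') hFb) (Nf c).
  rewrite (decT hcF); case: (dec _) => /=; lia.
have hk : k <= cnt (setdiff T B) W.
  rewrite -hLT2 lengthE; apply: cnt_ge_list; first exact/NoDupE.
  move=> x hx; split; first exact/hLT3/InE.
  have [h _] := hNf x.1.1; move: h; rewrite mem_W /inw eqxx andTb.
  move: (Nf x.1.1) => Nx h; have := mxP hx.
  case: (x.2 == Rung) => /=; rewrite /M0 in h; lia.
have h4 := cnt_split W hBT.
have h6 := cnt_split W hBF.
have [l [hl1 [hl2 hl3]]] := cnt_list (setdiff F B) (uniq_W Nf).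
exists l; split => //; split => //; rewrite hl2 -/W; lia.
Qed.

Lemma dirA k c : Spec (truncate Mn k) c -> exists j, c = Some j /\ k <= j <= k + n.
Proof.
case=> B [F [hFb [hBb [hBF hcard]]]].
have [[hBM [T [hT [hBT hc]]]] _] := hBb.
case: c hcard => [j|] hcard /=.
- exists j; split => //; case: hcard => lj [hlj1 [hlj2 hlj3]].
  have hup := upper_spec hFb hBb hBF hBT hT hc hlj1 (fun x h => proj2 (hlj3 x) h).
  rewrite hlj2 in hup.
  have [l' [hl'1 [hl'2 hl'3]]] := lower_spec hFb hBb hBF hBT hT hc.
  have : length l' <= length lj.
    apply/leP; apply: NoDup_incl_length => // x h; exact/hlj3/hl'3.
  rewrite hlj2; lia.
- exfalso; apply: hcard; apply: (finite_of_bound (m := k + n)) => l hl hin.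
  exact: upper_spec hFb hBb hBF hBT hT hc l hl hin.
Qed.

End PartA2.
Section PartB.
Variable p : nat.
Local Notation n := p.+1.
Local Notation E := (ledge n).
Local Notation Mn := (@Mn n).

Lemma rect_sub (X : eset E) c a b : a < b -> X (c, a, Rung) -> X (c, b, Rung) ->
  (forall i, a <= i -> i < b -> X (c, i, RailU) /\ X (c, i, RailW)) -> Defs.subset (Rect c a b) X.
Proof.
move=> hab ha hb hi [[c' i] k] [-> h]; case: k h => /= h.
- by case: (rect_rung hab h) => ->.
- by case/andP: h => h1 h2; case: (hi i h1 h2).
- by case/andP: h => h1 h2; case: (hi i h1 h2).
Qed.

Variables (m k : nat).
Definition Fw : eset E := fun e => let: (c, i, kd) := e in
  match kd with Rung => (c < m) -> i = 0 | RailU => True | RailW => c < m end.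
Definition B0 : eset E := fun e => let: (c, i, kd) := e in
  match kd with Rung => m <= c | RailU => True | RailW => c < m end.
Definition Ks : eset E := fun e => e.2 = RailU /\ val e.1.1 = 0 /\ e.1.2 < k.
Definition Bw : eset E := fun e => B0 e /\ ~ Ks e.

Lemma no_edge (A : eset E) c : evenA A -> (forall i, ~ A (c, i, RailU)) ->
  forall e, A e -> e.1.1 <> c.
Proof.
move=> hA hU [[c' i] kd] he /= hc; subst c'.
case: kd he => he.
- by case: (rung_rail hA he) => [/hU|[a' [_ /hU]]].
- exact: (hU i).
- by apply: (hU i); apply/(rail_eq _ _ hA).
Qed.

Lemma alg_nonempty_contra (A : eset E) : alg_cycle (@ladder_inc n) A ->
  (forall c i, ~ A (c, i, RailU)) -> False.
Proof.
move=> [[e he] hA] hU; exact: (no_edge hA (hU e.1.1) he).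
Qed.

Lemma Fw_fin : finitarize (truncate Mn k) Fw.
Proof.
apply: fin_of => A halg hA [l hl]; have hev := alg_even halg.
apply: (alg_nonempty_contra halg) => c i hUi.
case: (ltnP c m) => hcm.
- have hall : forall d, A (c, i + d, RailU).
    elim=> [|d IH]; first by rewrite addn0.
    have := pu c (i + d).+1 hev; rewrite /prv (decT IH) addnS.
    case: (decP (A (c, (i + d).+1, Rung))) => hr.
      by have := hA _ hr hcm.
    by case: (decP (A (c, (i + d).+1, RailU))).
  have := hall (mx l).+1; move/hl/InE/mxP => /=; lia.
- have : A (c, i, RailW) by apply/(rail_eq _ _ hev).
  move/hA => /=; lia.
Qed.

Lemma Fw_base : is_base (finitarize (truncate Mn k)) Fw.
Proof.
split; first exact: Fw_fin.
move=> F' hF' hsub [[c i] kd] hx; case: kd hx => /= hx.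
- move=> hcm; apply: NNPP => hi0.
  have hi : 0 < i by lia.
  apply: (fin_noalg hF' _ (Rect_fin c 0 i) (Rect_alg c hi)).
  apply: rect_sub => //; first by apply: hsub.
  by move=> j _ _; split; apply: hsub.
- by [].
- case: (ltnP c m) => // hcm; exfalso.
  have hi : i < i.+1 by [].
  apply: (fin_noalg hF' _ (Rect_fin c i i.+1) (Rect_alg c hi)).
  apply: rect_sub => //; try (apply: hsub => /=; lia).
  move=> j h1 h2; have -> : j = i by lia.
  by split => //; apply: hsub.
Qed.

Lemma B0_Mn : Mn B0.
Proof.
move=> [A [hA halg]]; have hev := alg_even halg.
apply: (alg_nonempty_contra halg) => c i hUi.
case: (ltnP c m) => hcm.
- case: (conn_left hev hUi) => a [_ [hRa _]].
  by move: (hA _ hRa) => /=; lia.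
- have : A (c, i, RailW) by apply/(rail_eq _ _ hev).
  move/hA => /=; lia.
Qed.

Hypothesis hmn : m <= n.

Definition Klist : seq E := [seq (ord0, t, RailU) | t <- iota 0 k].

Lemma Klist_uniq : uniq Klist.
Proof. rewrite map_inj_uniq ?iota_uniq //; by move=> t1 t2 []. Qed.

Lemma mem_Klist e : e \in Klist <-> Ks e.
Proof.
case: e => [[c i] kd]; rewrite /Ks /=; split.
- case/mapP => t; rewrite mem_iota => ht [-> -> ->]; split => //; split => //; lia.
- case=> -> [hc hi]; apply/mapP; exists i; first by rewrite mem_iota; lia.
  by congr (_, _, _); apply: val_inj.
Qed.

Lemma card_B0B : has_card (setdiff B0 Bw) k.
Proof.
have -> : k = size Klist by rewrite size_map size_iota.
apply: has_card_seq; first exact: Klist_uniq.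
move=> x; rewrite mem_Klist /setdiff /Bw; split.
- by case=> h1 h2; apply: NNPP => h3; apply: h2.
- move=> hK; split; last by case.
  by case: x hK => [[c i] kd] [/= -> _].
Qed.

Lemma Bw_trunc : truncate Mn k Bw.
Proof.
split; first by apply: (Mn_sub B0_Mn) => x [].
exists B0; split; first exact: B0_Mn.
split; first by move=> x [].
exact: card_B0B.
Qed.

Lemma cnt_B0 c N : cnt B0 (wl c N) = N.*2 + (m <= c).
Proof.
elim: N => [|N IH].
  by rewrite /cnt /= addn0; congr (nat_of_bool _); apply: dec_iff.
rewrite /cnt /= -/(cnt B0 (wl c N)) IH.
rewrite (dec_iff (P := B0 (c, N.+1, Rung)) (b := m <= c)) //.
rewrite (decT (P := B0 (c, N, RailU))) //.
rewrite (dec_iff (P := B0 (c, N, RailW)) (b := c < m)) //.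
case: (ltnP c m) => /= h; lia.
Qed.

Lemma Bw_base : is_base (truncate Mn k) Bw.
Proof.
split; first exact: Bw_trunc.
move=> B' [hB'M [T' [hT' [hB'T' hc']]]] hsub x hx; apply: NNPP => hnx.
have [LT [hLT1 [hLT2 hLT3]]] := hc'.
pose N := (maxn (mx (x :: LT)) k).+1.
pose W := Wn (p := p) (fun _ => N).
have hN1 : mx (x :: LT) < N by rewrite /N; lia.
have hN2 : k < N by rewrite /N; lia.
clearbody N.
have hBT' : forall e, Bw e -> T' e by move=> e /hsub /hB'T'.
have h1 : k.+1 <= cnt (setdiff T' Bw) W.
  have -> : k.+1 = size (x :: LT) by rewrite /= -hLT2 lengthE.
  apply: cnt_ge_list.
    rewrite /= (proj1 (NoDupE LT) hLT1) andbT; apply/negP => /InE /hLT3 [_]; by apply.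
  move=> y hy; split.
    move: hy; rewrite inE => /orP [/eqP ->|/InE /hLT3 [h1 h2]]; first by split => //; apply: hB'T'.
    by split => // /hsub.
  rewrite mem_W /inw eqxx andTb; have := mxP hy.
  case: ifP => _ h; [exact: (leq_trans h (ltnW hN1)) | exact: (leq_ltn_trans h hN1)].
have h2 : cnt (setdiff B0 Bw) W <= k := cnt_le_card (uniq_W _) card_B0B.
have h3 : cnt T' W <= cnt B0 W.
  apply: cnt_mono => c; rewrite cnt_B0.
  have := upper_Mn c hT' N.
  case: (ltnP c m) => hcm /=; last by case: (dec _) => /=; lia.
  rewrite (decF (P := conn T' c N)); first by lia.
  move=> hcon; case: (conn_D hcon (X := T')).
    move=> i hi; split; apply: hBT'; split => //=; rewrite /Ks /=; [|by case].
    case=> _ [_]; lia.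
  move=> a hD; exact: (Mn_noalg hT' hD (Dr_alg c a)).
have h4 := cnt_split W hBT'.
have h5 := cnt_split W (fun e (h : Bw e) => proj1 h).
lia.
Qed.

Lemma Bw_Fw : Defs.subset Bw Fw.
Proof. move=> [[c i] kd] [h _]; case: kd h => //= h1 h2; lia. Qed.

Definition Rlist : seq E := [seq (inord c, 0, Rung) | c <- iota 0 m].

Lemma card_FB : has_card (setdiff Fw Bw) (k + m).
Proof.
have -> : k + m = size (Rlist ++ Klist) by rewrite size_cat !size_map !size_iota addnC.
apply: has_card_seq.
  rewrite cat_uniq Klist_uniq andbT; apply/andP; split.
    rewrite map_inj_in_uniq ?iota_uniq // => a b; rewrite !mem_iota => ha hb h.
    have := congr1 (fun e : E => val e.1.1) h; rewrite /= !inordK; lia.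
  apply/hasP => -[e /mapP [t _ ->] /mapP [c _ []]] //.
case=> [[c i] kd]; rewrite mem_cat; split.
- case: kd => -[h1 h2]; rewrite /= in h1.
  + have hcm : c < m by case: (ltnP c m) => // h; exfalso; apply: h2; split; [exact: h | by case].
    apply/orP; left; apply/mapP; exists (val c); first by rewrite mem_iota add0n leq0n hcm.
    rewrite (h1 hcm); congr (_, _, _); apply: val_inj; rewrite /= inordK //; lia.
  + apply/orP; right; apply/mem_Klist; apply: NNPP => h; apply: h2; split => //.
  + by exfalso; apply: h2; split => //=; case.
- case/orP => [/mapP [t ht [hc hi hk]]|/mem_Klist hK].
  + subst; rewrite mem_iota in ht; split => /=.
      by [].
    move=> [/= h _]; move: h; rewrite inordK; lia.
  + split; last by case.
    by case: kd hK => // -[].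
Qed.

Lemma dirB_wit : Spec (truncate Mn k) (Some (k + m)).
Proof.
exists Bw, Fw; split; first exact: Fw_base.
split; first exact: Bw_base.
split; first exact: Bw_Fw.
exact: card_FB.
Qed.

End PartB.

Lemma dirB p k j : k <= j <= k + p.+1 -> Spec (truncate (@Mn p.+1) k) (Some j).
Proof.
move=> h; have -> : j = k + (j - k) by lia.
apply: dirB_wit; lia.
Qed.

Theorem proposition3p3p2 (n k : nat) (hn : 1 <= n) (c : option nat) :
  Spec (truncate (@Mn n) k) c <-> exists j, c = Some j /\ k <= j <= k + n.
Proof.
case: n hn => [//|p] _; split; first exact: dirA.
by case=> j [-> hj]; apply: dirB.
Qed.
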